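(* Let $a,x$ be integers with $3\le a\le x$, let $\lambda=(x,x,ax)$ and $n=x(a+2)$, and suppose $n-1$ is coprime to both $a$ and $x$. For $1\le i\le n-2$ write uniquely $i=(a+2)r_i+p_i$ with integers $0\le r_i<x$ and $0\le p_i<a+2$, let $f(i)=ar_i-(2x-1)p_i$, and for $s\in\mathbb{Z}$ let $F_s=\{i\in\{1,\dots,n-2\}: s=-\lfloor f(i)/(n-1)\rfloor\}$. Then for every $1\le i\le n-2$ and every integer $s$, $i\in F_s$ if and only if $n-1-i\in F_{2-s}$. *)

(* Defs.v *)
From mathcomp Require Import all_boot all_order all_algebra.
Set Implicit Arguments. Unset Strict Implicit. Unset Printing Implicit Defensive.
Import Order.TTheory GRing.Theory Num.Theory.

Definition nn (a x : nat) : nat := x * (a + 2).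

Definition r_ (a i : nat) : nat := i %/ (a + 2).
Definition p_ (a i : nat) : nat := i %% (a + 2).

Definition f_ (a x i : nat) : int :=
  ((a * r_ a i)%:Z - (2 * x%:Z - 1) * (p_ a i)%:Z)%R.

(* F_s = { i in {1,...,n-2} : s = - floor (f(i)/(n-1)) };
   for the positive divisor n-1, intdiv's divz is floor division. *)
Definition F_ (a x : nat) (s : int) : pred nat :=
  fun i => (1 <= i <= nn a x - 2)%N &&
           (s == - (f_ a x i %/ (nn a x - 1)%:Z)%Z)%R.

(* Main.v *)
Require Import Defs.
From mathcomp Require Import all_boot all_order all_algebra.
From mathcomp Require Import zify ring lra.
Import Order.TTheory GRing.Theory Num.Theory.

Local Open Scope ring_scope.
Lemma key (a x i : nat) :
  (3 <= a)%N -> (a <= x)%N -> coprime (nn a x - 1) a ->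
  (1 <= i <= nn a x - 2)%N ->
  (f_ a x (nn a x - 1 - i) %/ (nn a x - 1)%:Z)%Z =
  (- (f_ a x i %/ (nn a x - 1)%:Z)%Z - 2)%R.
Proof.
move=> a3 ax cop /andP[i1 i2].
have m0 : (0 < a + 2)%N by lia.
set r := r_ a i. set p := p_ a i.
have ei : i = (r * (a + 2) + p)%N by rewrite /r /p /r_ /p_ -divn_eq.
have pm : (p < a + 2)%N by rewrite /p /p_ ltn_mod.
have rx : (r < x)%N.
  rewrite /r /r_ ltn_divLR //. move: i2; rewrite /nn; lia.
have ej : (nn a x - 1 - i = (x - 1 - r) * (a + 2) + (a + 1 - p))%N.
  rewrite /nn ei. nia.
have rj : r_ a (nn a x - 1 - i) = (x - 1 - r)%N.
  by rewrite /r_ ej divnMDl // divn_small ?addn0 //; lia.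
have pj : p_ a (nn a x - 1 - i) = (a + 1 - p)%N.
  by rewrite /p_ ej modnMDl modn_small //; lia.
set N := (nn a x - 1)%N.
have NE : N = (x * (a + 2) - 1)%N by [].
have fj : f_ a x (N - i) = (- f_ a x i - N%:Z)%R.
  rewrite /f_ rj pj -/r -/p NE.
  have [r' er'] : exists r', (x - 1 - r = r')%N by eexists.
  have [p' ep'] : exists p', (a + 1 - p = p')%N by eexists.
  have Ex : x%:Z = (r%:Z + r'%:Z + 1)%R by lia.
  have Ea : a%:Z = (p%:Z + p'%:Z - 1)%R by lia.
  rewrite er' ep' -subzn; last by nia.
  rewrite !PoszM !PoszD Ex Ea. ring.
have N0 : (N%:Z != 0)%R by rewrite /N /nn; apply/eqP; lia.
have ndiv : ~~ (N%:Z %| f_ a x i)%Z.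
  apply/negP => hd.
  have hd2 : (N%:Z %| f_ a x i + p%:Z * N%:Z)%Z.
    by rewrite rpredD // dvdz_mull // dvdzz.
  have eq2 : (f_ a x i + p%:Z * N%:Z = a%:Z * (r + x * p)%N%:Z)%R.
    rewrite /f_ -/r -/p NE -subzn; last by nia.
    rewrite !PoszM !PoszD. ring.
  rewrite eq2 Gauss_dvdzr in hd2; last by rewrite coprimezE.
  rewrite dvdzE /= in hd2.
  have X1 : (x * (a + 2) = x * (a + 1) + x)%N by ring.
  have X0 : (x * (a + 1) = x * a + x)%N by ring.
  have pos : (0 < r + x * p)%N.
    case: (posnP p) => [p0|pp].
      case: (posnP r) => [r0|]; last by lia.
      by move: i1; rewrite ei r0 p0.
    have : (0 < x * p)%N by rewrite muln_gt0 pp andbT; lia.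
    lia.
  have le2 := dvdn_leq pos hd2.
  have hxp : (x * p <= x * (a + 1))%N by rewrite leq_mul2l; lia.
  have le1 : (r + x * p <= N)%N by rewrite NE; lia.
  have eqN : (r + x * p = N)%N by lia.
  have pa : p = (a + 1)%N.
    apply/eqP; rewrite eqn_leq; apply/andP; split; first by lia.
    rewrite leqNgt; apply/negP => hp.
    have : (x * p <= x * a)%N by rewrite leq_mul2l; lia.
    lia.
  have rr : r = (x - 1)%N by move: eqN; rewrite pa NE; lia.
  have X2 : ((x - 1) * (a + 2) + (a + 2) = x * (a + 2))%N.
    by rewrite mulnBl mul1n subnK // leq_pmull //; lia.
  move: i2; rewrite ei pa rr /nn; lia.
have hr := divz_eq (f_ a x i) N%:Z.
set q := (f_ a x i %/ N%:Z)%Z in hr *.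
set rm := (f_ a x i %% N%:Z)%Z in hr.
have rm0 : (0 <= rm)%R by exact: modz_ge0.
have rmN : (rm < N%:Z)%R by apply: ltz_pmod; rewrite /N /nn; lia.
have rmn0 : rm != 0%R.
  apply/eqP => h; move/negP: ndiv; apply; exact/dvdz_mod0P.
have e3 : f_ a x (N - i) = ((- q - 2) * N%:Z + (N%:Z - rm))%R.
  rewrite fj {1}hr. ring.
rewrite e3 divzMDl // divz_small ?addr0 //.
apply/andP; split.
  by rewrite subr_ge0 ltW.
have : (0 < rm)%R by rewrite lt_def rmn0.
move=> h. rewrite /=. lia.
Qed.

Local Close Scope ring_scope.
Theorem proposition4p10 (a x : nat) :
  (3 <= a)%N -> (a <= x)%N ->
  coprime (nn a x - 1) a -> coprime (nn a x - 1) x ->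
  forall (i : nat) (s : int), (1 <= i <= nn a x - 2)%N ->
    (i \in F_ a x s) <-> (nn a x - 1 - i \in F_ a x (2 - s)%R).
Proof.
move=> a3 ax cop _ i s hi.
have big : (15 <= nn a x)%N by rewrite /nn; nia.
have hj : (1 <= nn a x - 1 - i <= nn a x - 2)%N by lia.
rewrite /in_mem /= /F_ hi hj /= key //.
set q := (f_ a x i %/ (nn a x - 1)%:Z)%Z.
split => /eqP h; apply/eqP.
  rewrite h; ring.
have : s = (2 - (- (- q - 2)))%R by rewrite -h; ring.
move=> ->; ring.
Qed.
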